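(* The following identities hold: \begin{align*}\sum_{k=1}^\infty\frac{5929k^2-4675k+914}{k(-2)^k\binom{4k}k}&=-189-30\log2, \\\sum_{k=1}^\infty\frac{39083k^2-31627k+5624}{k(-24)^k\binom{4k}k}&=40\log\frac23-117, \\\sum_{k=1}^\infty\frac{475397k^2-335665k+55072}{k(-192)^k\binom{4k}k}&=160\log\frac34-207. \end{align*} *)

(* Defs.v *)
From Stdlib Require Import Reals.
From Coquelicot Require Import Coquelicot.
Open Scope R_scope.

Definition binom4 (k : nat) : R := Binomial.C (4 * k) k.

Definition sterm (a b c m : R) (k : nat) : R :=
  (a * (INR k)^2 + b * INR k + c) / (INR k * m ^ k * binom4 k).

(* Main.v *)
Require Import Defs.
From Stdlib Require Import Reals Lra Lia.
From Coquelicot Require Import Coquelicot.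
Open Scope R_scope.

Lemma cont_of_der (f : R -> R) x : ex_derive f x -> continuous f x.
Proof. intro H. apply (@ex_derive_continuous R_AbsRing R_NormedModule f x H). Qed.
Lemma RInt_der (f df : R -> R) (a b : R) :
  (forall x : R, Rmin a b <= x <= Rmax a b -> is_derive f x (df x)) ->
  (forall x : R, Rmin a b <= x <= Rmax a b -> continuous df x) ->
  is_RInt df a b (f b - f a).
Proof. intros H1 H2. exact (@is_RInt_derive R_CompleteNormedModule f df a b H1 H2). Qed.

Ltac fixeq := match goal with |- ?a = ?b => change (@eq R a b) end.
Ltac clean := repeat match goal with
  | |- context [@scal ?K ?V ?a ?b] => change (@scal K V a b) with (a * b)
  | |- context [@plus ?G ?a ?b] => change (@plus G a b) with (a + b)
  | |- context [@minus ?G ?a ?b] => change (@minus G a b) with (a - b)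
  end; fixeq.
Lemma factS n : INR (Factorial.fact (S n)) = INR (S n) * INR (Factorial.fact n).
Proof. change (Factorial.fact (S n)) with (S n * Factorial.fact n)%nat. apply mult_INR. Qed.
Lemma factpos n : INR (Factorial.fact n) > 0.
Proof. apply lt_0_INR, Factorial.lt_O_fact. Qed.

Lemma minusR (a b : R) : minus a b = a - b. Proof. reflexivity. Qed.
Ltac fold_S p := change (match p with 0%nat => 1 | S _ => INR p + 1 end) with (INR (S p)) in *.

Lemma beta_int (q p : nat) : is_RInt (fun x => x^p * (1-x)^q) 0 1
  (INR (Factorial.fact p) * INR (Factorial.fact q) / INR (Factorial.fact (p+q+1))).
Proof.
revert p; induction q as [|q IH]; intros p.
- apply is_RInt_ext with (fun x => x ^ p).
  { intros x _; simpl; ring. }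
  replace (INR (Factorial.fact p) * INR (Factorial.fact 0) / INR (Factorial.fact (p + 0 + 1)))
    with (minus ((fun x => x^(S p) / INR (S p)) 1) ((fun x => x^(S p) / INR (S p)) 0)).
  2:{ rewrite minusR. replace (p+0+1)%nat with (S p) by lia.
      rewrite factS, pow1, pow_i by lia. pose proof (factpos p).
      rewrite S_INR. simpl Factorial.fact. change (INR 1) with 1. match goal with |- ?a = ?b => change (@eq R a b) end. field. pose proof (pos_INR p); lra. }
  apply (RInt_der (fun x => x^(S p) / INR (S p))).
  + intros x _. auto_derive. auto. fold_S p.
    rewrite S_INR. simpl pred. fixeq. field. pose proof (pos_INR p); lra.
  + intros x _. apply cont_of_der. auto_derive. auto.
- set (h := fun x => x^(S p) * (1-x)^(S q)).
  set (dh := fun x => INR (S p) * (x^p * (1-x)^(S q)) - INR (S q) * (x^(S p) * (1-x)^q)).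
  assert (Hd : is_RInt dh 0 1 (minus (h 1) (h 0))).
  { apply (RInt_der h).
    + intros x _. unfold h, dh. auto_derive. auto. fold_S p. fold_S q. simpl pred. fixeq. change (1 + - x) with (1 - x). simpl pow. ring.
    + intros x _. apply cont_of_der. unfold dh. auto_derive. auto. }
  assert (H0 : minus (h 1) (h 0) = 0).
  { unfold h. rewrite minusR. replace (1-1) with 0 by ring. simpl pow. fixeq. ring. }
  rewrite H0 in Hd.
  specialize (IH (S p)).
  pose proof (is_RInt_scal _ _ _ (INR (S q)) _ IH) as IH2.
  pose proof (is_RInt_plus _ _ _ _ _ _ Hd IH2) as H3.
  pose proof (is_RInt_scal _ _ _ (/ INR (S p)) _ H3) as H4.
  eapply is_RInt_ext; [| replace (INR (Factorial.fact p) * INR (Factorial.fact (S q)) / INR (Factorial.fact (p + S q + 1))) with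
     (scal (/ INR (S p)) (plus 0 (scal (INR (S q)) (INR (Factorial.fact (S p)) * INR (Factorial.fact q) / INR (Factorial.fact (S p + q + 1)))))); [exact H4|] ].
  + intros x _. unfold dh. clean. simpl pow. rewrite !S_INR. field.
    pose proof (pos_INR p); lra.
  + clean.
    replace (S p + q + 1)%nat with (p + S q + 1)%nat by lia.
    pose proof (factpos (p + S q + 1)).
    rewrite !factS, !S_INR. field. split. lra. pose proof (pos_INR p); lra.
Qed.

Section G.
Variables a b c m : R.
Hypothesis hm : m <= -2.
Definition P (k : nat) := a * (INR k)^2 + b * INR k + c.
Definition termf (n : nat) (x : R) := P (S n) / m^(S n) * (x^n * (1-x)^(3 * S n)).

Lemma term_int n : is_RInt (termf n) 0 1 (sterm a b c m (S n)).
Proof.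
pose proof (is_RInt_scal _ _ _ (P (S n) / m^(S n)) _ (beta_int (3 * S n) n)) as H.
eapply is_RInt_ext; [| replace (sterm a b c m (S n)) with (scal (P (S n) / m ^ S n)
     (INR (Factorial.fact n) * INR (Factorial.fact (3 * S n)) / INR (Factorial.fact (n + 3 * S n + 1)))); [exact H|]].
- intros x _. unfold termf. clean. reflexivity.
- clean. unfold sterm, binom4, Binomial.C, P.
  replace (4 * S n - S n)%nat with (3 * S n)%nat by lia.
  replace (n + 3 * S n + 1)%nat with (4 * S n)%nat by lia.
  rewrite factS.
  assert (m ^ S n <> 0) by (apply pow_nonzero; lra).
  pose proof (factpos n). pose proof (factpos (3 * S n)). pose proof (factpos (4 * S n)).
  pose proof (pos_INR n). rewrite S_INR.
  field. lra.
Qed.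

Definition tt (x : R) := x * (1-x)^3 / m.
Definition Q (t : R) := a*(1+t) + b*(1-t) + c*(1-t)^2.
Definition Gf (x : R) := ((1-x)^3 / m) * Q (tt x) / (1 - tt x)^3.
Definition Rn (k : nat) (t : R) := a*t*(1+t) + (2*a*(INR k+1)+b)*t*(1-t)
   + (a*(INR k + 1)^2 + b*(INR k + 1) + c) * (1-t)^2.
Definition Ef (k : nat) (x : R) := ((1-x)^3 / m) * (tt x)^k * Rn k (tt x) / (1 - tt x)^3.

Lemma poly_id (t : R) (N : nat) :
  (1-t)^3 * sum_n (fun n => P (S n) * t^n) N = Q t - t^(S N) * Rn (S N) t.
Proof.
induction N as [|N IH].
- rewrite sum_O. unfold P, Q, Rn. rewrite !S_INR. simpl INR. simpl pow. fixeq. ring.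
- rewrite sum_Sn. clean. rewrite Rmult_plus_distr_l, IH.
  unfold P, Q, Rn. rewrite !S_INR. simpl pow. fixeq. ring.
Qed.

Lemma termf_eq n x : termf n x = ((1-x)^3/m) * (P (S n) * (tt x)^n).
Proof.
unfold termf, tt. rewrite pow_mult. set (u := (1-x)^3).
unfold Rdiv. rewrite !Rpow_mult_distr, pow_inv. simpl pow.
assert (m ^ n <> 0) by (apply pow_nonzero; lra).
field. split; lra.
Qed.

Lemma sum_eq N x : 1 - tt x <> 0 ->
  sum_n (fun n => termf n x) N = Gf x - Ef (S N) x.
Proof.
intros Ht.
rewrite (sum_n_ext _ (fun n => mult ((1-x)^3/m) (P (S n) * (tt x)^n))).
2:{ intros n. rewrite termf_eq. reflexivity. }
rewrite sum_n_mult_l.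
change (mult ((1-x)^3/m) (sum_n (fun n => P (S n) * tt x ^ n) N)) with
   (((1-x)^3/m) * (sum_n (fun n => P (S n) * tt x ^ n) N)).
pose proof (poly_id (tt x) N) as E.
assert (E2 : sum_n (fun n => P (S n) * tt x ^ n) N = (Q (tt x) - tt x ^ S N * Rn (S N) (tt x)) / (1 - tt x)^3).
{ assert (Hg : forall s : R, (1 - tt x)^3 * s = Q (tt x) - tt x ^ S N * Rn (S N) (tt x) ->
     s = (Q (tt x) - tt x ^ S N * Rn (S N) (tt x)) / (1 - tt x)^3).
  { intros s Hs. rewrite <- Hs. field. exact Ht. }
  exact (Hg _ E). }
rewrite E2. unfold Gf, Ef. generalize (tt x ^ S N); intro y. fixeq. field. split; [lra | exact Ht].
Qed.

Lemma partial_int N : is_RInt (fun x => sum_n (fun n => termf n x) N) 0 1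
   (sum_n (fun n => sterm a b c m (S n)) N).
Proof.
induction N as [|N IH].
- eapply is_RInt_ext; [| rewrite sum_O; apply term_int].
  intros x _. rewrite sum_O. reflexivity.
- rewrite sum_Sn.
  eapply is_RInt_ext; [| apply (is_RInt_plus _ _ _ _ _ _ IH (term_int (S N)))].
  intros x _. rewrite sum_Sn. reflexivity.
Qed.

Lemma inv_bound : -1/2 <= / m < 0.
Proof.
split. 2: apply Rinv_lt_0_compat; lra.
replace (/ m) with (- / (-m)) by (field; lra).
assert (/ (-m) <= / 2) by (apply Rinv_le_contravar; lra). lra.
Qed.

Lemma tt_bounds x : 0 <= x <= 1 -> -1/8 <= tt x <= 0.
Proof.
intros Hx. unfold tt.
assert (Hs0 : 0 <= x * (1-x)^3) by (apply Rmult_le_pos; [lra | apply pow_le; lra]).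
assert (Hs1 : x * (1-x)^3 <= 1/4).
{ simpl pow. assert (0 <= x*(1-x)) by nra. assert ((1-x)*(1-x) <= 1) by nra. nra. }
set (s := x * (1-x)^3) in *.
pose proof inv_bound as Hi.
unfold Rdiv. split; nra.
Qed.

Definition K := 8 * (Rabs a + Rabs b + Rabs c).

Lemma sub_sub (g e : R) : g - (g - e) = e. Proof. ring. Qed.

Lemma mul_bound u v U V : Rabs u <= U -> Rabs v <= V -> Rabs (u * v) <= U * V.
Proof.
intros H1 H2. rewrite Rabs_mult. apply Rmult_le_compat; auto using Rabs_pos.
Qed.

Lemma Rn_bound k t : -1/8 <= t <= 0 -> Rabs (Rn k t) <= K * (INR k + 1)^2.
Proof.
intros Ht. unfold Rn, K. set (M := INR k + 1).
assert (HM : 1 <= M) by (unfold M; pose proof (pos_INR k); lra).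
assert (A1 : Rabs (t * (1 + t)) <= 1) by (apply Rabs_le; nra).
assert (A2 : Rabs (t * (1 - t)) <= 1) by (apply Rabs_le; nra).
assert (A3 : Rabs ((1 - t)^2) <= 2) by (apply Rabs_le; simpl; nra).
assert (B2 : Rabs (2*a*M+b) <= 2 * Rabs a * M + Rabs b).
{ eapply Rle_trans. apply Rabs_triang. rewrite !Rabs_mult, (Rabs_right 2), (Rabs_right M) by lra. lra. }
assert (B3 : Rabs (a*M^2+b*M+c) <= Rabs a * M^2 + Rabs b * M + Rabs c).
{ eapply Rle_trans. apply Rabs_triang. eapply Rle_trans. apply Rplus_le_compat_r. apply Rabs_triang.
  rewrite !Rabs_mult, (Rabs_right M) by lra. rewrite (Rabs_right (M^2)). lra. apply Rle_ge, pow_le; lra. }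
pose proof (mul_bound _ _ _ _ (Rle_refl (Rabs a)) A1) as T1.
pose proof (mul_bound _ _ _ _ B2 A2) as T2.
pose proof (mul_bound _ _ _ _ B3 A3) as T3.
replace (a * t * (1 + t)) with (a * (t * (1+t))) by ring.
replace ((2 * a * M + b) * t * (1 - t)) with ((2 * a * M + b) * (t * (1 - t))) by ring.
eapply Rle_trans. apply Rabs_triang. eapply Rle_trans. apply Rplus_le_compat_r. apply Rabs_triang.
pose proof (Rabs_pos a). pose proof (Rabs_pos b). pose proof (Rabs_pos c).
assert (M <= M^2) by (simpl; nra).
assert (Rabs a * M <= Rabs a * M^2) by (apply Rmult_le_compat_l; lra).
assert (Rabs b * M <= Rabs b * M^2) by (apply Rmult_le_compat_l; lra).
assert (Rabs a <= Rabs a * M^2) by (simpl; nra).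
assert (Rabs b <= Rabs b * M^2) by (simpl; nra).
assert (Rabs c <= Rabs c * M^2) by (simpl; nra).
nra.
Qed.

Lemma pow4 k : (INR k + 1)^2 <= 4^k.
Proof.
induction k as [|k IH].
- simpl. lra.
- rewrite S_INR. simpl pow in *. pose proof (pos_INR k). nra.
Qed.

Lemma Ef_bound k x : 0 <= x <= 1 -> Rabs (Ef k x) <= K * (/2)^k.
Proof.
intros Hx. pose proof (tt_bounds x Hx) as Ht. unfold Ef.
set (t := tt x) in *.
assert (C1 : Rabs ((1-x)^3/m) <= 1).
{ apply Rabs_le. assert (0 <= (1-x)^3 <= 1). { split. apply pow_le; lra. simpl; nra. }
  pose proof inv_bound as Hi.
  unfold Rdiv; nra. }
assert (C2 : Rabs (t^k) <= (/8)^k).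
{ rewrite <- RPow_abs. apply pow_incr. split. apply Rabs_pos. apply Rabs_le. lra. }
assert (C3 : Rabs (Rn k t) <= K * 4^k).
{ eapply Rle_trans. apply Rn_bound; lra. apply Rmult_le_compat_l. unfold K; pose proof (Rabs_pos a); pose proof (Rabs_pos b); pose proof (Rabs_pos c); lra. apply pow4. }
assert (C4 : Rabs (/ (1-t)^3) <= 1).
{ assert (1 <= (1-t)^3). { simpl. nra. }
  rewrite Rabs_right. 2: { apply Rle_ge, Rlt_le, Rinv_0_lt_compat; lra. }
  rewrite <- Rinv_1. apply Rinv_le_contravar; lra. }
unfold Rdiv at 2.
eapply Rle_trans. apply (mul_bound _ _ _ _ (mul_bound _ _ _ _ (mul_bound _ _ _ _ C1 C2) C3) C4).
replace (1 * (/ 8) ^ k * (K * 4 ^ k) * 1) with (K * ((/8)^k * 4^k)) by ring.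
rewrite <- Rpow_mult_distr. replace (/8 * 4) with (/2) by field. lra.
Qed.

Lemma gen_series (V : R) : is_RInt Gf 0 1 V -> is_series (fun n => sterm a b c m (S n)) V.
Proof.
intros HG.
assert (HE : forall N, Rabs (V - sum_n (fun n => sterm a b c m (S n)) N) <= K * (/2)^(S N)).
{ intros N.
  pose proof (is_RInt_minus _ _ _ _ _ _ HG (partial_int N)) as H.
  assert (H' : is_RInt (Ef (S N)) 0 1 (V - sum_n (fun n => sterm a b c m (S n)) N)).
  { eapply is_RInt_ext; [| exact H]. intros x Hx.
    rewrite Rmin_left, Rmax_right in Hx by lra. clean.
    cbv beta. rewrite sum_eq. apply sub_sub. pose proof (tt_bounds x ltac:(lra)). lra. }
  pose proof (norm_RInt_le_const (Ef (S N)) 0 1 (V - sum_n (fun n => sterm a b c m (S n)) N) (K * (/2)^(S N)) ltac:(lra)) as B.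
  replace (K * (/2)^(S N)) with ((1 - 0) * (K * (/2)^(S N))) by ring.
  apply B; [| exact H'].
  intros x Hx. apply Ef_bound. exact Hx. }
assert (L0 : is_lim_seq (fun N => V - sum_n (fun n => sterm a b c m (S n)) N) 0).
{ apply is_lim_seq_abs_0.
  apply (is_lim_seq_le_le (fun _ => 0) _ (fun N => K * (/2)^N)).
  - intros N. split. apply Rabs_pos. eapply Rle_trans. apply HE.
    apply Rmult_le_compat_l. unfold K; pose proof (Rabs_pos a); pose proof (Rabs_pos b); pose proof (Rabs_pos c); lra.
    simpl. pose proof (pow_le (/2) N ltac:(lra)). nra.
  - apply is_lim_seq_const.
  - replace (Finite 0) with (Rbar_mult K 0) by (simpl; f_equal; ring).
    apply is_lim_seq_scal_l. apply is_lim_seq_geom. rewrite Rabs_right; lra. }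
assert (L1 : is_lim_seq (sum_n (fun n => sterm a b c m (S n))) (V - 0)).
{ eapply is_lim_seq_ext; [| apply (is_lim_seq_minus' _ _ V 0 (is_lim_seq_const V) L0)].
  intros N. simpl. ring. }
rewrite Rminus_0_r in L1. exact L1.
Qed.
End G.

Definition Dp (m x : R) := m - x * (1-x)^3.

Lemma Gf_cont a b c m x : m <= -2 -> 0 <= x <= 1 -> continuous (Gf a b c m) x.
Proof.
intros hm Hx. pose proof (tt_bounds m hm x Hx) as Ht.
apply cont_of_der. unfold Gf, Q, tt in *. auto_derive.
repeat split; try lra; repeat apply Rmult_integral_contrapositive_currified; try lra.
Qed.

Lemma negD m x : m <= -2 -> 0 <= x <= 1 -> 0 < - Dp m x.
Proof.
intros hm Hx. unfold Dp. assert (0 <= x*(1-x)^3) by (apply Rmult_le_pos; [lra | apply pow_le; lra]). lra.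
Qed.

Definition N1 (x:R) := -4108 + x*(-7912 + x*(20118 + x*(-22512 + x*(14716 + x*(-8112 + x*(3594 + x*(-648))))))).
Definition H1 (x:R) := N1 x / (Dp (-2) x)^2 + 30 * ln (2 - x) - 236 * ln (- Dp (-2) x).
Definition N2 (x:R) := -4503744 + x*(-647568 + x*(1514280 + x*(-1384992 + x*(483504 + x*(-51312 + x*(22824 + x*(-4128))))))).
Definition H2 (x:R) := N2 x / (Dp (-24) x)^2 + 40 * ln (3 - x) - 1416 * ln (- Dp (-24) x).
Definition N3 (x:R) := -3087765504 + x*(-64964736 + x*(144571584 + x*(-126418176 + x*(39493248 + x*(-494976 + x*(222912 + x*(-40704))))))).
Definition H3 (x:R) := N3 x / (Dp (-192) x)^2 - 160 * ln (x + 3) - 13728 * ln (- Dp (-192) x).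

Ltac nz := repeat split; try lra; repeat apply Rmult_integral_contrapositive_currified; try lra.

Lemma case1 : is_RInt (Gf 5929 (-4675) 914 (-2)) 0 1 (-189 - 30 * ln 2).
Proof.
replace (-189 - 30 * ln 2) with (H1 1 - H1 0).
2:{ unfold H1. replace (Dp (-2) 1) with (-2) by (unfold Dp; ring).
    replace (Dp (-2) 0) with (-2) by (unfold Dp; ring).
    replace (2 - 1) with 1 by ring. replace (2 - 0) with 2 by ring. rewrite ln_1.
    unfold N1. field. }
apply RInt_der.
- intros x Hx. rewrite Rmin_left, Rmax_right in Hx by lra.
  pose proof (negD (-2) x ltac:(lra) Hx) as HD.
  unfold H1, N1, Dp in *. auto_derive.
  + nz.
  + unfold Gf, Q, tt. field. nz.
- intros x Hx. rewrite Rmin_left, Rmax_right in Hx by lra. apply Gf_cont; lra.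
Qed.

Lemma case2 : is_RInt (Gf 39083 (-31627) 5624 (-24)) 0 1 (40 * ln (2 / 3) - 117).
Proof.
replace (40 * ln (2 / 3) - 117) with (H2 1 - H2 0).
2:{ unfold H2. replace (Dp (-24) 1) with (-24) by (unfold Dp; ring).
    replace (Dp (-24) 0) with (-24) by (unfold Dp; ring).
    replace (3 - 1) with 2 by ring. replace (3 - 0) with 3 by ring. rewrite ln_div by lra.
    unfold N2. field. }
apply RInt_der.
- intros x Hx. rewrite Rmin_left, Rmax_right in Hx by lra.
  pose proof (negD (-24) x ltac:(lra) Hx) as HD.
  unfold H2, N2, Dp in *. auto_derive.
  + nz.
  + unfold Gf, Q, tt. field. nz.
- intros x Hx. rewrite Rmin_left, Rmax_right in Hx by lra. apply Gf_cont; lra.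
Qed.

Lemma case3 : is_RInt (Gf 475397 (-335665) 55072 (-192)) 0 1 (160 * ln (3 / 4) - 207).
Proof.
replace (160 * ln (3 / 4) - 207) with (H3 1 - H3 0).
2:{ unfold H3. replace (Dp (-192) 1) with (-192) by (unfold Dp; ring).
    replace (Dp (-192) 0) with (-192) by (unfold Dp; ring).
    replace (1 + 3) with 4 by ring. replace (0 + 3) with 3 by ring. rewrite ln_div by lra.
    unfold N3. field. }
apply RInt_der.
- intros x Hx. rewrite Rmin_left, Rmax_right in Hx by lra.
  pose proof (negD (-192) x ltac:(lra) Hx) as HD.
  unfold H3, N3, Dp in *. auto_derive.
  + nz.
  + unfold Gf, Q, tt. field. nz.
- intros x Hx. rewrite Rmin_left, Rmax_right in Hx by lra. apply Gf_cont; lra.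
Qed.

Theorem lemma3p4 :
  is_series (fun n : nat => sterm 5929 (-4675) 914 (-2) (S n))
    (-189 - 30 * ln 2)
  /\ is_series (fun n : nat => sterm 39083 (-31627) 5624 (-24) (S n))
    (40 * ln (2 / 3) - 117)
  /\ is_series (fun n : nat => sterm 475397 (-335665) 55072 (-192) (S n))
    (160 * ln (3 / 4) - 207).
Proof.
split; [|split]; apply gen_series; try lra.
- exact case1.
- exact case2.
- exact case3.
Qed.
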